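(* Consider the discrete Motsch–Tadmor model described in the context, under the standing assumptions stated there. Suppose the initial data $(X(0),V(0))$ and the coupling strength $\kappa$ satisfy \[ \|\Delta^x(0)\|_F < M \quad\text{and}\quad \|\Delta^v(0)\|_F < \kappa \int_{\|\Delta^x(0)\|_F}^{M} \psi(s)\,ds , \] and let $(X(n),V(n))_{n\ge 0}$ be the solution of the discrete model with this initial data. Then: (i) $\sup_{0\le n<\infty} \|\Delta^x(n)\|_F \le M$; (ii) for any constant $0<C<1$, for all sufficiently small time-steps $h>0$ one has \[ \|\Delta^v(n)\|_F \le \|\Delta^v(0)\|_F\, e^{-C\kappa\psi(M) n h}\qquad \text{for all } n\ge 0 . \]
   Context: Discrete Motsch–Tadmor (MT) model: fix integers $N\ge1$, $d\ge1$, a coupling strength $\kappa>0$, a time-step $h>0$, and a communication function $a:[0,\infty)\to\mathbb{R}$. Standing assumptions: there are constants $0<c_1\le c_2$ with $c_1\le a(r)\le c_2$ for all $r\ge0$; $a$ is Lipschitz with constant $L_a>0$, i.e. $|a(r_1)-a(r_2)|\le L_a|r_1-r_2|$ for $r_1,r_2\ge0$; and $0<h<\min\{1,1/\kappa\}$. A solution is a sequence $(X(n),V(n))_{n\ge0}$ with $X(n)=(x_1(n),\dots,x_N(n))$, $V(n)=(v_1(n),\dots,v_N(n))\in(\mathbb{R}^d)^N$ satisfying, for $i=1,\dots,N$ and $n\ge0$, $x_i(n+1)=x_i(n)+h v_i(n)$, $v_i(n+1)=v_i(n)+h\kappa\sum_{j=1}^N\phi_{ij}(n)(v_j(n)-v_i(n))$,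 where $\phi_{ij}(n)=\frac{a(\|x_i(n)-x_j(n)\|)}{\sum_{k=1}^N a(\|x_i(n)-x_k(n)\|)}$ and $\|\cdot\|$ is the Euclidean norm. Notation: $\Delta^x_{ij}(n)=x_i(n)-x_j(n)$, $\Delta^v_{ij}(n)=v_i(n)-v_j(n)$, $\|\Delta^x(n)\|_F=(\sum_{i,j=1}^N\|\Delta^x_{ij}(n)\|^2)^{1/2}$, $\|\Delta^v(n)\|_F=(\sum_{i,j=1}^N\|\Delta^v_{ij}(n)\|^2)^{1/2}$. Constants: $\|\phi\|_{\mathrm{Lip}}:=\frac{L_a}{Nc_1}\left(1+\frac{c_2}{c_1}\right)$, $M:=\frac{1}{4N\|\phi\|_{\mathrm{Lip}}}$, and $\psi(s):=1-\|\phi\|_{\mathrm{Lip}}Ns$. *)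

(* Defs.v *)
From HB Require Import structures.
From mathcomp Require Import all_boot all_order all_algebra.
From mathcomp Require Import all_classical all_reals all_analysis.
Set Implicit Arguments. Unset Strict Implicit. Unset Printing Implicit Defensive.
Import Order.TTheory GRing.Theory Num.Theory.
Import numFieldNormedType.Exports.
Local Open Scope classical_set_scope.
Local Open Scope ring_scope.

Section MT.
Variables (R : realType) (N d : nat).

Definition enorm (u : 'rV[R]_d) : R := Num.sqrt (\sum_(k < d) (u 0 k) ^+ 2).

Definition frob (z : 'I_N -> 'rV[R]_d) : R :=
  Num.sqrt (\sum_(i < N) \sum_(j < N) (enorm (z i - z j)) ^+ 2).

Definition mt_phi (a : R -> R) (x : 'I_N -> 'rV[R]_d) (i j : 'I_N) : R :=
  a (enorm (x i - x j)) / \sum_(k < N) a (enorm (x i - x k)).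

Definition is_MT_solution (a : R -> R) (kappa h : R)
  (X V : nat -> 'I_N -> 'rV[R]_d) : Prop :=
  forall (n : nat) (i : 'I_N),
    X n.+1 i = X n i + h *: V n i /\
    V n.+1 i = V n i + (h * kappa) *: \sum_(j < N) (mt_phi a (X n) i j *: (V n j - V n i)).

Definition phiLip (La c1 c2 : R) : R := La / (N%:R * c1) * (1 + c2 / c1).
Definition MTM (La c1 c2 : R) : R := 1 / (4 * N%:R * phiLip La c1 c2).
Definition MTpsi (La c1 c2 : R) (s : R) : R := 1 - phiLip La c1 c2 * N%:R * s.

End MT.

(* Main.v *)
Require Import Defs.
From HB Require Import structures.
From mathcomp Require Import all_boot all_order all_algebra.
From mathcomp Require Import all_classical all_reals all_analysis.
From mathcomp Require Import ring lra.
Import Order.TTheory GRing.Theory Num.Theory.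
Import numFieldNormedType.Exports.
Local Open Scope classical_set_scope.
Local Open Scope ring_scope.
Definition nrm {R : realType} {T : finType} (f : T -> R) : R :=
  Num.sqrt (\sum_t f t ^+ 2).

Lemma CS_sum {R : realType} {T : finType} (f g : T -> R) :
  (\sum_t f t * g t) ^+ 2 <= (\sum_t f t ^+ 2) * (\sum_t g t ^+ 2).
Proof.
have e : forall s t, (f s * g t - f t * g s) ^+ 2 =
   (f s ^+ 2 * g t ^+ 2 + f t ^+ 2 * g s ^+ 2) - 2 * ((f s * g s) * (f t * g t)).
  by move=> s t; ring.
have H0 : 0 <= \sum_s \sum_t (f s * g t - f t * g s) ^+ 2.
  by apply: sumr_ge0 => s _; apply: sumr_ge0 => t _; exact: sqr_ge0.
have H1 : \sum_s \sum_t (f s * g t - f t * g s) ^+ 2 =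
   2 * ((\sum_t f t ^+ 2) * (\sum_t g t ^+ 2)) - 2 * (\sum_t f t * g t) ^+ 2.
  under eq_bigr do under eq_bigr do rewrite e.
  under eq_bigr do rewrite sumrB big_split /=.
  rewrite sumrB big_split /=.
  have A : \sum_s \sum_t f s ^+ 2 * g t ^+ 2 = (\sum_t f t ^+ 2) * (\sum_t g t ^+ 2).
    by rewrite mulr_suml; apply: eq_bigr => s _; rewrite mulr_sumr.
  have B : \sum_s \sum_t f t ^+ 2 * g s ^+ 2 = (\sum_t f t ^+ 2) * (\sum_t g t ^+ 2).
    by rewrite exchange_big.
  have C : \sum_s \sum_t 2 * ((f s * g s) * (f t * g t)) = 2 * (\sum_t f t * g t) ^+ 2.
    rewrite expr2 mulr_suml mulr_sumr; apply: eq_bigr => s _.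
    rewrite mulr_sumr mulr_sumr; apply: eq_bigr => t _; ring.
  rewrite A B C; ring.
lra.
Qed.

Lemma nrm_ge0 {R : realType} {T : finType} (f : T -> R) : 0 <= nrm f.
Proof. exact: sqrtr_ge0. Qed.

Lemma nrm_sq {R : realType} {T : finType} (f : T -> R) : nrm f ^+ 2 = \sum_t f t ^+ 2.
Proof. by rewrite sqr_sqrtr // sumr_ge0 // => t _; exact: sqr_ge0. Qed.

Lemma nrm_le {R : realType} {T : finType} (f : T -> R) (B : R) :
  0 <= B -> \sum_t f t ^+ 2 <= B ^+ 2 -> nrm f <= B.
Proof.
move=> B0 H; rewrite /nrm -(ger0_norm B0) -sqrtr_sqr.
by rewrite ler_sqrt // sqr_ge0.
Qed.

Lemma sq_le_nonneg {R : realType} (x y : R) : 0 <= y -> x ^+ 2 <= y ^+ 2 -> x <= y.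
Proof. move=> y0 h; nra. Qed.

Lemma sum_mul_le {R : realType} {T : finType} (f g : T -> R) :
  \sum_t f t * g t <= nrm f * nrm g.
Proof.
apply: sq_le_nonneg; first by rewrite mulr_ge0 // nrm_ge0.
by rewrite exprMn !nrm_sq; exact: CS_sum.
Qed.

Lemma nrm_comb {R : realType} {T : finType} (f g : T -> R) (a b : R) :
  0 <= a -> 0 <= b ->
  nrm (fun t => a * f t + b * g t) <= a * nrm f + b * nrm g.
Proof.
move=> a0 b0; apply: nrm_le.
  by rewrite addr_ge0 // mulr_ge0 // nrm_ge0.
have E : \sum_t (a * f t + b * g t) ^+ 2 =
   a ^+ 2 * \sum_t f t ^+ 2 + b ^+ 2 * \sum_t g t ^+ 2 + 2 * (a * b) * \sum_t f t * g t.
  rewrite !mulr_sumr -!big_split /=; apply: eq_bigr => t _; ring.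
rewrite E -!nrm_sq.
have := sum_mul_le f g.
have := nrm_ge0 f; have := nrm_ge0 g.
have ab : 0 <= 2 * (a * b) by rewrite mulr_ge0 // mulr_ge0.
move=> h1 h2 h3.
have h4 := ler_wpM2l ab h3.
nra.
Qed.

Lemma nrm_ext {R : realType} {T : finType} (f g : T -> R) :
  (forall t, f t = g t) -> nrm f = nrm g.
Proof. by move=> e; rewrite /nrm; congr Num.sqrt; apply: eq_bigr => t _; rewrite e. Qed.

Lemma enorm_ge0 {R : realType} {d : nat} (u : 'rV[R]_d) : 0 <= enorm u.
Proof. exact: sqrtr_ge0. Qed.

Lemma enorm_tri {R : realType} {d : nat} (u w : 'rV[R]_d) :
  enorm (u + w) <= enorm u + enorm w.
Proof.
have -> : enorm (u + w) = nrm (fun k : 'I_d => 1 * u 0 k + 1 * w 0 k).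
  by rewrite /enorm /nrm; congr Num.sqrt; apply: eq_bigr => k _; rewrite !mxE !mul1r.
have := nrm_comb (fun k : 'I_d => u 0 k) (fun k : 'I_d => w 0 k) 1 1 ler01 ler01.
by rewrite !mul1r.
Qed.

Lemma enorm_opp {R : realType} {d : nat} (u : 'rV[R]_d) : enorm (- u) = enorm u.
Proof. by rewrite /enorm; congr Num.sqrt; apply: eq_bigr => k _; rewrite !mxE sqrrN. Qed.

Lemma enorm_rev {R : realType} {d : nat} (u w : 'rV[R]_d) :
  `|enorm u - enorm w| <= enorm (u - w).
Proof.
have h1 : enorm u <= enorm (u - w) + enorm w.
  by have := enorm_tri (u - w) w; rewrite subrK.
have h2 : enorm w <= enorm (u - w) + enorm u.
  by have := enorm_tri (w - u) u; rewrite subrK -[w - u]opprB enorm_opp.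
rewrite ler_norml; apply/andP; split; lra.
Qed.

Lemma S_ge {R : realType} {N d : nat} (a : R -> R) (c1 : R) (x : 'I_N -> 'rV[R]_d) i :
  (forall r, 0 <= r -> c1 <= a r) ->
  N%:R * c1 <= \sum_k a (enorm (x i - x k)).
Proof.
move=> ha.
have -> : N%:R * c1 = \sum_(k < N) c1 by rewrite sumr_const card_ord mulr_natl.
by apply: ler_sum => k _; apply: ha; exact: enorm_ge0.
Qed.

Lemma phi_sum1 {R : realType} {N d : nat} (a : R -> R) (c1 : R) (x : 'I_N -> 'rV[R]_d) i :
  (0 < N)%N -> 0 < c1 -> (forall r, 0 <= r -> c1 <= a r) ->
  \sum_j mt_phi a x i j = 1.
Proof.
move=> N0 c0 ha; rewrite /mt_phi -mulr_suml mulfV //.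
have := S_ge a c1 x i ha.
have : 0 < N%:R * c1 :> R by rewrite mulr_gt0 // ltr0n.
move=> p q; apply/eqP => e; rewrite e in q; lra.
Qed.

Lemma phi_lip {R : realType} {N d : nat} (a : R -> R) (c1 c2 La : R) (x : 'I_N -> 'rV[R]_d) i j k :
  (0 < N)%N -> 0 < c1 -> c1 <= c2 ->
  (forall r, 0 <= r -> c1 <= a r /\ a r <= c2) -> 0 < La ->
  (forall r1 r2, 0 <= r1 -> 0 <= r2 -> `|a r1 - a r2| <= La * `|r1 - r2|) ->
  `|mt_phi a x i k - mt_phi a x j k| <= phiLip N La c1 c2 * enorm (x i - x j).
Proof.
move=> N0 c0 c12 ha La0 hL.
have ha1 : forall r, 0 <= r -> c1 <= a r by move=> r r0; case: (ha r r0).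
set e := enorm (x i - x j).
have e0 : 0 <= e := enorm_ge0 _.
have dif : forall l, `|a (enorm (x i - x l)) - a (enorm (x j - x l))| <= La * e.
  move=> l; apply: (le_trans (hL _ _ (enorm_ge0 _) (enorm_ge0 _))).
  apply: ler_wpM2l; first exact: ltW.
  rewrite /e; have -> : x i - x j = (x i - x l) - (x j - x l) by rewrite opprB addrA subrK.
  exact: enorm_rev.
set Si := \sum_l a (enorm (x i - x l)).
set Sj := \sum_l a (enorm (x j - x l)).
set aik := a (enorm (x i - x k)).
set ajk := a (enorm (x j - x k)).
have Nc0 : 0 < N%:R * c1 :> R by rewrite mulr_gt0 // ltr0n.
have Sig : N%:R * c1 <= Si := S_ge a c1 x i ha1.
have Sjg : N%:R * c1 <= Sj := S_ge a c1 x j ha1.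
have Si0 : 0 < Si by lra.
have Sj0 : 0 < Sj by lra.
have ajk0 : 0 <= ajk <= c2.
  by rewrite /ajk; case: (ha (enorm (x j - x k)) (enorm_ge0 _)) => p q; apply/andP; split; lra.
move/andP: ajk0 => [ajk0 ajk2].
have dS : `|Sj - Si| <= N%:R * (La * e).
  rewrite /Si /Sj -sumrB.
  apply: (le_trans (ler_norm_sum _ _ _)).
  have -> : N%:R * (La * e) = \sum_(l < N) (La * e) by rewrite sumr_const card_ord mulr_natl.
  apply: ler_sum => l _; rewrite distrC; exact: dif.
have eqd : mt_phi a x i k - mt_phi a x j k = ((aik - ajk) * Sj + ajk * (Sj - Si)) / (Si * Sj).
  rewrite /mt_phi -/Si -/Sj -/aik -/ajk; field.
  by apply/andP; split; rewrite gt_eqF.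
rewrite eqd normrM normfV (gtr0_norm (mulr_gt0 Si0 Sj0)) ler_pdivrMr ?mulr_gt0 //.
have num : `|(aik - ajk) * Sj + ajk * (Sj - Si)| <= La * e * Sj + c2 * (N%:R * (La * e)).
  apply: (le_trans (ler_normD _ _)); rewrite !normrM (gtr0_norm Sj0) (ger0_norm ajk0).
  apply: lerD.
    by apply: ler_wpM2r; [exact: ltW | exact: dif].
  apply: (@le_trans _ _ (ajk * (N%:R * (La * e)))); first by apply: ler_wpM2l.
  apply: ler_wpM2r => //; rewrite mulr_ge0 ?mulr_ge0 ?ler0n //; exact: ltW.
apply: (le_trans num).
set u := Si / (N%:R * c1).
set v := Sj / (N%:R * c1).
have u1 : 1 <= u by rewrite /u ler_pdivlMr // mul1r.
have v1 : 1 <= v by rewrite /v ler_pdivlMr // mul1r.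
have Nn0 : N%:R != 0 :> R by rewrite pnatr_eq0 -lt0n.
have eqr : phiLip N La c1 c2 * e * (Si * Sj) =
   La * e * Sj * u + La * c2 * e * N%:R * u * v.
  rewrite /u /v /phiLip; field.
  by apply/andP; split => //; rewrite gt_eqF.
rewrite eqr.
have le0 : 0 <= La * e by rewrite mulr_ge0 //; exact: ltW.
have p1 : La * e * Sj <= La * e * Sj * u.
  by apply: (ler_peMr _ u1); rewrite mulr_ge0 //; exact: ltW.
have uv : 1 <= u * v by nra.
have p2 : La * c2 * e * N%:R <= La * c2 * e * N%:R * (u * v).
  apply: (ler_peMr _ uv).
  rewrite !mulr_ge0 ?ler0n //; lra.
rewrite mulrA in p2.
have -> : c2 * (N%:R * (La * e)) = La * c2 * e * N%:R by ring.
lra.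
Qed.

Lemma sum3 {R : realType} {A B C : finType} (F : A * (B * C) -> R) :
  \sum_p F p = \sum_i \sum_j \sum_c F (i, (j, c)).
Proof.
transitivity (\sum_(p : A * (B * C)) F (p.1, p.2)).
  by apply: eq_bigr => -[i q] _.
rewrite -(pair_bigA _ (fun i q => F (i, q))) /=.
apply: eq_bigr => i _.
transitivity (\sum_(q : B * C) F (i, (q.1, q.2))).
  by apply: eq_bigr => -[j c] _.
by rewrite -(pair_bigA _ (fun j c => F (i, (j, c)))).
Qed.

Lemma frobE {R : realType} {N d : nat} (z : 'I_N -> 'rV[R]_d) :
  frob z = nrm (fun p : 'I_N * ('I_N * 'I_d) => (z p.1 - z p.2.1) 0 p.2.2).
Proof.
rewrite /frob /nrm sum3; congr Num.sqrt; apply: eq_bigr => i _; apply: eq_bigr => j _.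
by rewrite /enorm sqr_sqrtr // sumr_ge0 // => c _; exact: sqr_ge0.
Qed.

Lemma pos_step {R : realType} {N d : nat} (a : R -> R) (kappa h : R)
  (X V : nat -> 'I_N -> 'rV[R]_d) n :
  is_MT_solution a kappa h X V -> 0 <= h ->
  frob (X n.+1) <= frob (X n) + h * frob (V n).
Proof.
move=> sol h0.
rewrite !frobE.
rewrite (@nrm_ext _ _ _ (fun p : 'I_N * ('I_N * 'I_d) =>
   1 * (X n p.1 - X n p.2.1) 0 p.2.2 + h * (V n p.1 - V n p.2.1) 0 p.2.2)).
  by have := nrm_comb (fun p : 'I_N * ('I_N * 'I_d) => (X n p.1 - X n p.2.1) 0 p.2.2)
     (fun p : 'I_N * ('I_N * 'I_d) => (V n p.1 - V n p.2.1) 0 p.2.2) 1 h ler01 h0; rewrite !mul1r.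
move=> p; case: (sol n p.1) => -> _; case: (sol n p.2.1) => -> _.
rewrite !mxE; ring.
Qed.

Lemma vel_id {R : realType} {N d : nat} (a : R -> R) (c1 kappa h : R)
  (X V : nat -> 'I_N -> 'rV[R]_d) n i j c :
  is_MT_solution a kappa h X V ->
  (0 < N)%N -> 0 < c1 -> (forall r, 0 <= r -> c1 <= a r) ->
  (V n.+1 i - V n.+1 j) 0 c = (1 - h * kappa) * (V n i - V n j) 0 c +
    (h * kappa) * \sum_k (mt_phi a (X n) i k - mt_phi a (X n) j k) * (V n k - V n i) 0 c.
Proof.
move=> sol N0 c0 ha.
case: (sol n i) => _ ->; case: (sol n j) => _ ->.
rewrite !mxE !summxE.
under eq_bigr do rewrite !mxE.
under [X in _ = _ + _ * X]eq_bigr do rewrite mulrBl.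
rewrite sumrB.
set pj := fun k => mt_phi a (X n) j k.
have s1 := phi_sum1 a c1 (X n) j N0 c0 ha.
under [\sum_(k < N) (mt_phi a (X n) j k *: (V n k - V n j)) 0 c]eq_bigr do rewrite !mxE.
have E : \sum_k mt_phi a (X n) j k * (V n k 0 c - V n j 0 c) =
   \sum_k mt_phi a (X n) j k * (V n k 0 c - V n i 0 c) + (V n i 0 c - V n j 0 c).
  rewrite -[X in _ = _ + X]mul1r -s1 mulr_suml -big_split /=.
  by apply: eq_bigr => k _; ring.
have F : forall k l, (V n k - V n l) 0 c = V n k 0 c - V n l 0 c by move=> k l; rewrite !mxE.
have G : forall l, \sum_k mt_phi a (X n) l k * (V n k - V n i) 0 c =
   \sum_k mt_phi a (X n) l k * (V n k 0 c - V n i 0 c).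
  by move=> l; apply: eq_bigr => k _; rewrite F.
rewrite !G E; ring.
Qed.

Lemma frob_ge0 {R : realType} {N d : nat} (z : 'I_N -> 'rV[R]_d) : 0 <= frob z.
Proof. exact: sqrtr_ge0. Qed.

Lemma frob_sq {R : realType} {N d : nat} (z : 'I_N -> 'rV[R]_d) :
  frob z ^+ 2 = \sum_i \sum_j enorm (z i - z j) ^+ 2.
Proof. by rewrite /frob sqr_sqrtr // !sumr_ge0 // => i _; rewrite sumr_ge0 // => j _; exact: sqr_ge0. Qed.

Lemma enorm_sq {R : realType} {d : nat} (u : 'rV[R]_d) :
  enorm u ^+ 2 = \sum_c (u 0 c) ^+ 2.
Proof. by rewrite /enorm sqr_sqrtr // sumr_ge0 // => c _; exact: sqr_ge0. Qed.

Lemma term_le_sum {R : realType} {T : finType} (F : T -> R) t :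
  (forall s, 0 <= F s) -> F t <= \sum_s F s.
Proof.
move=> F0; rewrite (bigD1 t) //= lerDl; apply: sumr_ge0 => s _; exact: F0.
Qed.

Lemma sq_le_of_abs {R : realType} (D B : R) : `|D| <= B -> D ^+ 2 <= B ^+ 2.
Proof.
rewrite ler_norml => /andP[h1 h2].
have B0 : 0 <= B by lra.
nra.
Qed.

Lemma Tm_bound {R : realType} {N d : nat} (a : R -> R) (c1 c2 La : R)
  (x v : 'I_N -> 'rV[R]_d) :
  (0 < N)%N -> 0 < c1 -> c1 <= c2 ->
  (forall r, 0 <= r -> c1 <= a r /\ a r <= c2) -> 0 < La ->
  (forall r1 r2, 0 <= r1 -> 0 <= r2 -> `|a r1 - a r2| <= La * `|r1 - r2|) ->
  nrm (fun p : 'I_N * ('I_N * 'I_d) =>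
        \sum_k (mt_phi a x p.1 k - mt_phi a x p.2.1 k) * (v k - v p.1) 0 p.2.2)
  <= N%:R * phiLip N La c1 c2 * frob x * frob v.
Proof.
move=> N0 c0 c12 ha La0 hL.
set L := phiLip N La c1 c2.
have L0 : 0 <= L.
  rewrite /L /phiLip; apply: mulr_ge0.
    by rewrite divr_ge0 ?mulr_ge0 ?ler0n //; lra.
  have : 0 <= c2 / c1 by rewrite divr_ge0 //; lra.
  lra.
have Nr0 : 0 <= N%:R :> R by rewrite ler0n.
have N1 : 1 <= N%:R :> R by rewrite ler1n.
apply: nrm_le.
  apply: mulr_ge0; [apply: mulr_ge0; [exact: mulr_ge0 | exact: frob_ge0] | exact: frob_ge0].
set B := fun (i : 'I_N) (c : 'I_d) => \sum_k ((v k - v i) 0 c) ^+ 2.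
have B0 : forall i c, 0 <= B i c by move=> i c; apply: sumr_ge0 => k _; exact: sqr_ge0.
have pt : forall i j c,
   (\sum_k (mt_phi a x i k - mt_phi a x j k) * (v k - v i) 0 c) ^+ 2
     <= N%:R * (L * enorm (x i - x j)) ^+ 2 * B i c.
  move=> i j c.
  apply: (le_trans (CS_sum _ _)); apply: ler_wpM2r; first exact: B0.
  have -> : N%:R * (L * enorm (x i - x j)) ^+ 2 = \sum_(k < N) (L * enorm (x i - x j)) ^+ 2.
    by rewrite sumr_const card_ord mulr_natl.
  apply: ler_sum => k _; apply: sq_le_of_abs.
  exact: (phi_lip a c1 c2 La x i j k N0 c0 c12 ha La0 hL).
have Q : forall i, \sum_c B i c <= frob v ^+ 2.
  move=> i; rewrite /B exchange_big /= frob_sq.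
  apply: ler_sum => k _; under [X in _ <= X]eq_bigr do rewrite enorm_sq.
  apply: (term_le_sum (fun i' => \sum_c ((v k - v i') 0 c) ^+ 2) i).
  by move=> s; apply: sumr_ge0 => c _; exact: sqr_ge0.
rewrite sum3.
apply: (@le_trans _ _ (\sum_i \sum_j \sum_c N%:R * (L * enorm (x i - x j)) ^+ 2 * B i c)).
  by apply: ler_sum => i _; apply: ler_sum => j _; apply: ler_sum => c _; exact: pt.
apply: (@le_trans _ _ (\sum_i \sum_j N%:R * (L * enorm (x i - x j)) ^+ 2 * frob v ^+ 2)).
  apply: ler_sum => i _; apply: ler_sum => j _; rewrite -mulr_sumr.
  by apply: ler_wpM2l; [rewrite mulr_ge0 // sqr_ge0 | exact: Q].
have -> : \sum_i \sum_j N%:R * (L * enorm (x i - x j)) ^+ 2 * frob v ^+ 2 =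
    N%:R * L ^+ 2 * frob v ^+ 2 * frob x ^+ 2.
  rewrite (frob_sq x) mulr_sumr; apply: eq_bigr => i _; rewrite mulr_sumr; apply: eq_bigr => j _.
  ring.
have fx := frob_ge0 x; have fv := frob_ge0 v.
have e : (N%:R * L * frob x * frob v) ^+ 2 = N%:R * (N%:R * L ^+ 2 * frob v ^+ 2 * frob x ^+ 2) by ring.
rewrite e; apply: ler_peMl => //.
apply: mulr_ge0; [apply: mulr_ge0; [apply: mulr_ge0 => //; exact: sqr_ge0 | exact: sqr_ge0] | exact: sqr_ge0].
Qed.

Lemma vel_step {R : realType} {N d : nat} (a : R -> R) (c1 c2 La kappa h : R)
  (X V : nat -> 'I_N -> 'rV[R]_d) n :
  is_MT_solution a kappa h X V ->
  (0 < N)%N -> 0 < c1 -> c1 <= c2 ->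
  (forall r, 0 <= r -> c1 <= a r /\ a r <= c2) -> 0 < La ->
  (forall r1 r2, 0 <= r1 -> 0 <= r2 -> `|a r1 - a r2| <= La * `|r1 - r2|) ->
  0 < h -> 0 < kappa -> h * kappa < 1 ->
  frob (V n.+1) <= (1 - h * kappa * (1 - phiLip N La c1 c2 * N%:R * frob (X n))) * frob (V n).
Proof.
move=> sol N0 c0 c12 ha La0 hL h0 k0 hk.
have ha1 : forall r, 0 <= r -> c1 <= a r by move=> r r0; case: (ha r r0).
rewrite (frobE (V n.+1)).
rewrite (@nrm_ext _ _ _ (fun p : 'I_N * ('I_N * 'I_d) =>
   (1 - h * kappa) * (V n p.1 - V n p.2.1) 0 p.2.2 +
   (h * kappa) * \sum_k (mt_phi a (X n) p.1 k - mt_phi a (X n) p.2.1 k) * (V n k - V n p.1) 0 p.2.2)); last first.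
  by move=> p; exact: (vel_id a c1 kappa h X V n p.1 p.2.1 p.2.2 sol N0 c0 ha1).
have a0 : 0 <= 1 - h * kappa by lra.
have b0 : 0 <= h * kappa by rewrite mulr_ge0 // ltW.
apply: (le_trans (nrm_comb _ _ _ _ a0 b0)).
rewrite -frobE.
have T := Tm_bound a c1 c2 La (X n) (V n) N0 c0 c12 ha La0 hL.
have := ler_wpM2l b0 T.
have := frob_ge0 (V n).
move=> fv H.
have -> : (1 - h * kappa * (1 - phiLip N La c1 c2 * N%:R * frob (X n))) * frob (V n) =
  (1 - h * kappa) * frob (V n) + h * kappa * (N%:R * phiLip N La c1 c2 * frob (X n) * frob (V n)) by ring.
lra.
Qed.
Definition Psi {R : realType} (K s : R) : R := s - K / 2 * s ^+ 2.

Lemma seq_main {R : realType} (K M kappa h : R) (x v : nat -> R) :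
  0 < K -> K * M = 1 / 4 -> 0 < kappa -> 0 < h -> h * kappa < 1 ->
  (forall n, 0 <= x n) -> (forall n, 0 <= v n) ->
  (forall n, x n.+1 <= x n + h * v n) ->
  (forall n, v n.+1 <= (1 - h * kappa * (1 - K * x n)) * v n) ->
  x 0%N < M ->
  v 0%N < kappa * (Psi K M - Psi K (x 0%N)) ->
  forall n, [/\ x n <= M, v n + kappa * Psi K (x n) <= v 0%N + kappa * Psi K (x 0%N)
             & v n <= v 0%N * (1 - h * kappa * (1 - K * M)) ^+ n].
Proof.
move=> K0 KM k0 h0 hk x0 v0 hx hv xM vM.
have M0 : 0 < M.
  have : 0 < K * M by rewrite KM.
  by rewrite pmulr_rgt0.
have hkM : 0 < h * kappa by rewrite mulr_gt0.
have r0 : 0 <= 1 - h * kappa * (1 - K * M) by rewrite KM; lra.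
have r1 : 1 - h * kappa * (1 - K * M) <= 1 by rewrite KM; lra.
elim=> [|n [IHx IHL IHv]].
  by split; [lra | lra | rewrite expr0 mulr1].
set r := 1 - h * kappa * (1 - K * M) in r0 r1 IHv *.
have vn0 := v0 n; have vs0 := v0 n.+1; have xn0 := x0 n; have xs0 := x0 n.+1.
have hxn := hx n; have hvn := hv n.
have v00 := v0 0%N.
have vnv0 : v n <= v 0%N.
  apply: le_trans IHv _; rewrite ler_piMr // exprn_ile1 //.
have psin : 3 / 4 <= 1 - K * x n.
  have : K * x n <= K * M by rewrite ler_pM2l.
  lra.
have psin1 : 1 - K * x n <= 1 by nra.
have Va : v n.+1 <= v 0%N * r ^+ n.+1.
  apply: (le_trans hvn).
  have : (1 - h * kappa * (1 - K * x n)) * v n <= r * v n.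
    apply: ler_wpM2r => //; rewrite /r.
    have : h * kappa * (1 - K * M) <= h * kappa * (1 - K * x n).
      by apply: ler_wpM2l; [lra | lra].
    lra.
  move=> H; apply: (le_trans H).
  rewrite exprS mulrCA; apply: ler_wpM2l => //; lra.
have Pdiff : forall y z, Psi K y - Psi K z = (y - z) * (1 - K * (y + z) / 2).
  by move=> y z; rewrite /Psi; field.
have Pb : Psi K (x n.+1) - Psi K (x n) <= h * v n * (1 - K * x n).
  rewrite Pdiff.
  have hvp : 0 <= h * v n * (1 - K * x n) by rewrite mulr_ge0 ?mulr_ge0 //; lra.
  case: (leP (x n) (x n.+1)) => cmp.
  - have e1 : (x n.+1 - x n) * (1 - K * (x n.+1 + x n) / 2) <= (x n.+1 - x n) * (1 - K * x n).
      apply: ler_wpM2l; first lra.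
      have : K * x n <= K * x n.+1 by rewrite ler_pM2l.
      lra.
    apply: (le_trans e1); apply: ler_wpM2r; lra.
  - have : 0 <= 1 - K * (x n.+1 + x n) / 2.
      have : K * x n.+1 <= K * x n by rewrite ler_pM2l //; exact: ltW.
      lra.
    move=> pos.
    have : (x n.+1 - x n) * (1 - K * (x n.+1 + x n) / 2) <= 0.
      by rewrite nmulr_rle0 //; lra.
    lra.
have Lb : v n.+1 + kappa * Psi K (x n.+1) <= v 0%N + kappa * Psi K (x 0%N).
  have : kappa * (Psi K (x n.+1) - Psi K (x n)) <= kappa * (h * v n * (1 - K * x n)).
    by apply: ler_wpM2l => //; exact: ltW.
  move=> H; apply: le_trans IHL.
  have e : (1 - h * kappa * (1 - K * x n)) * v n + kappa * (h * v n * (1 - K * x n)) = v n by ring.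
  lra.
split=> //.
rewrite leNgt; apply/negP => xsM.
have x00 := x0 0%N.
have PM : Psi K M - Psi K (x 0%N) <= M.
  rewrite Pdiff.
  have : 0 <= K * (M + x 0%N) by rewrite mulr_ge0 //; lra.
  have : K * x 0%N <= K * M by rewrite ler_pM2l //; exact: ltW.
  move=> a b.
  have : (M - x 0%N) * (1 - K * (M + x 0%N) / 2) <= (M - x 0%N) * 1.
    by apply: ler_wpM2l; lra.
  lra.
have v0M : v 0%N < kappa * M.
  apply: (lt_le_trans vM); apply: ler_wpM2l => //; exact: ltW.
have hv0 : h * v 0%N <= M.
  have : h * v 0%N <= h * (kappa * M) by apply: ler_wpM2l; lra.
  have : h * (kappa * M) <= M by rewrite mulrA; nra.
  lra.
have hvn0 : h * v n <= h * v 0%N by apply: ler_wpM2l; lra.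
have xs2 : x n.+1 <= 2 * M by lra.
have Pgt : Psi K M < Psi K (x n.+1).
  rewrite -subr_gt0 Pdiff.
  have : K * x n.+1 <= K * (2 * M) by rewrite ler_pM2l.
  move=> a.
  apply: mulr_gt0; lra.
have : kappa * Psi K M < kappa * Psi K (x n.+1) by rewrite ltr_pM2l.
lra.
Qed.


Lemma int_psi {R : realType} (K a b : R) : a < b ->
  Rintegral (@lebesgue_measure R) `[a, b] (fun s => 1 - K * s) =
  (b - K / 2 * b ^+ 2) - (a - K / 2 * a ^+ 2).
Proof.
move=> ab.
pose F := fun x : R => x - K / 2 * x ^+ 2.
have dF : forall x : R, is_derive x (1:R) F (1 - K * x).
  move=> x. rewrite /F.
  apply: is_derive_eq.
  by rewrite -[X in _ - X = _]/((K/2) * (x * 1 + x * 1)); field.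
have df : forall x : R, is_derive x (1:R) (fun s => 1 - K * s) (- K).
  move=> x; apply: is_derive_eq.
  by rewrite add0r mul1r; congr (- _); exact: mulr1.
have cF : continuous F.
  by move=> x; apply: differentiable_continuous; apply/derivable1_diffP; exact: (@ex_derive _ _ _ _ _ _ _ (dF x)).
have cf : continuous (fun s : R => 1 - K * s).
  by move=> x; apply: differentiable_continuous; apply/derivable1_diffP; exact: (@ex_derive _ _ _ _ _ _ _ (df x)).
rewrite /Rintegral.
rewrite (continuous_FTC2 (F := F) ab).
- by [].
- exact: continuous_subspaceT.
- split.
  + by move=> x _; exact: (@ex_derive _ _ _ _ _ _ _ (dF x)).
  + exact/cvg_at_right_filter/cF.
  + exact/cvg_at_left_filter/cF.
- move=> x _; rewrite derive1E. exact: derive_val.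
Qed.


Theorem theorem3p4 (R : realType) (N d : nat) (kappa : R) (a : R -> R)
  (c1 c2 La : R) (X0 V0 : 'I_N -> 'rV[R]_d) :
  (1 <= N)%N -> (1 <= d)%N -> 0 < kappa ->
  0 < c1 -> c1 <= c2 ->
  (forall r, 0 <= r -> c1 <= a r /\ a r <= c2) ->
  0 < La ->
  (forall r1 r2, 0 <= r1 -> 0 <= r2 -> `|a r1 - a r2| <= La * `|r1 - r2|) ->
  frob X0 < MTM N La c1 c2 ->
  frob V0 < kappa * (\int[@lebesgue_measure R]_(s in `[frob X0, MTM N La c1 c2])
                       MTpsi N La c1 c2 s) ->
  (* (i) *)
  (forall (h : R), 0 < h -> h < Num.min 1 (1 / kappa) ->
     forall X V : nat -> 'I_N -> 'rV[R]_d,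
       is_MT_solution a kappa h X V -> X 0%N = X0 -> V 0%N = V0 ->
       forall n : nat, frob (X n) <= MTM N La c1 c2)
  /\
  (* (ii) *)
  (forall C : R, 0 < C -> C < 1 ->
     exists h0 : R, 0 < h0 /\
       forall (h : R), 0 < h -> h < h0 -> h < Num.min 1 (1 / kappa) ->
         forall X V : nat -> 'I_N -> 'rV[R]_d,
           is_MT_solution a kappa h X V -> X 0%N = X0 -> V 0%N = V0 ->
           forall n : nat,
             frob (V n) <= frob V0 *
               expR (- (C * kappa * MTpsi N La c1 c2 (MTM N La c1 c2) * n%:R * h))).
Proof.
move=> N0 _ k0 c0 c12 ha La0 hL xM vI.
set K := phiLip N La c1 c2 * N%:R.
set M := MTM N La c1 c2.
have Nr : 0 < N%:R :> R by rewrite ltr0n.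
have L0 : 0 < phiLip N La c1 c2.
  rewrite /phiLip; apply: mulr_gt0.
    by rewrite divr_gt0 // mulr_gt0.
  have : 0 < c2 / c1 by rewrite divr_gt0 //; lra.
  lra.
have K0 : 0 < K by rewrite /K mulr_gt0.
have KM : K * M = 1 / 4.
  rewrite /K /M /MTM; field.
  by apply/andP; split; rewrite gt_eqF.
have I : Rintegral (@lebesgue_measure R) `[frob X0, M] (fun s => MTpsi N La c1 c2 s) =
    Psi K M - Psi K (frob X0).
  exact: (int_psi K (frob X0) M xM).
rewrite I in vI.
have core : forall h, 0 < h -> h < Num.min 1 (1 / kappa) ->
     forall X V : nat -> 'I_N -> 'rV[R]_d,
       is_MT_solution a kappa h X V -> X 0%N = X0 -> V 0%N = V0 ->
       forall n, [/\ frob (X n) <= M,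
          frob (V n) + kappa * Psi K (frob (X n)) <= frob (V 0%N) + kappa * Psi K (frob (X 0%N))
        & frob (V n) <= frob (V 0%N) * (1 - h * kappa * (1 - K * M)) ^+ n].
  move=> h h0 hmin X V sol eX eV.
  have hk : h * kappa < 1.
    move: hmin; rewrite lt_min => /andP[_].
    by rewrite ltr_pdivlMr // mul1r.
  apply: (@seq_main R K M kappa h (fun n => frob (X n)) (fun n => frob (V n)) K0 KM k0 h0 hk).
  - by move=> n; exact: frob_ge0.
  - by move=> n; exact: frob_ge0.
  - by move=> n; apply: pos_step sol (ltW h0).
  - by move=> n; exact: (vel_step a c1 c2 La kappa h X V n sol N0 c0 c12 ha La0 hL h0 k0 hk).
  - by rewrite eX.
  - by rewrite eX eV.
split.
  by move=> h h0 hmin X V sol eX eV n; case: (core h h0 hmin X V sol eX eV n).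
move=> C C0 C1; exists 1; split => // h h0 _ hmin X V sol eX eV n.
case: (core h h0 hmin X V sol eX eV n) => _ _ Hv.
rewrite eV in Hv.
apply: (le_trans Hv).
have hk : h * kappa < 1.
  move: hmin; rewrite lt_min => /andP[_].
  by rewrite ltr_pdivlMr // mul1r.
have hkp : 0 < h * kappa by rewrite mulr_gt0.
have ps : 1 - K * M = 3 / 4 by rewrite KM; field.
have r0 : 0 <= 1 - h * kappa * (1 - K * M) by rewrite ps; lra.
apply: ler_wpM2l; first exact: frob_ge0.
set t := h * kappa * (1 - K * M).
have r1 : 1 - t <= expR (- t) by have := expR_ge1Dx (- t); rewrite addrC.
apply: (@le_trans _ _ (expR (- t) ^+ n)).
  by apply: lerXn2r => //; rewrite nnegrE // expR_ge0.
rewrite -expRM_natl ler_expR.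
have -> : MTpsi N La c1 c2 (MTM N La c1 c2) = 1 - K * M by [].
rewrite /t ps.
have nn : 0 <= n%:R :> R by rewrite ler0n.
have : C * (kappa * (h * n%:R)) <= kappa * (h * n%:R).
  rewrite ler_piMl //; [| lra]. by rewrite !mulr_ge0 //; lra.
nra.
Qed.
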